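(* There exist a financial system $S$ in the base model (all contracts of the same priority) and banks $u\neq v$ with a debt contract from $u$ to $v$ of positive weight, such that: $S$ has exactly one solution $r$; the system $S'$ obtained from $S$ by deleting this debt contract (everything else unchanged) has exactly one solution $r'$; and $q'_v(r')>q_v(r)$, where $q_v$ and $q'_v$ denote the payoff of $v$ in $S$ and $S'$, respectively.
   Context: A financial system with payment priorities consists of: a finite set $V$ of banks; external assets $e_v\ge 0$ for each $v\in V$; a number $P\ge 1$ of priority levels; and a finite set of contracts, each of which is either a debt contract from a debtor $u$ to a creditor $v\neq u$ with weight $c>0$, or a credit default swap (CDS) from a debtor $u$ to a creditor $v\neq u$ in reference to a bank $w\notin\{u,v\}$ (the reference entity) with weight $c>0$. Every contract has a priority in $\{1,\dots,P\}$ (1 is the highest priority). It is assumed that every bank that is the reference entity of some CDS is the debtor of at least one debt contract of positive weight. Given a recovery rate vector $r\in[0,1]^V$: the liability of a contract $k$ is $l_k(r)=c$ if $k$ is a debt of weight $c$, and $l_k(r)=c\,(1-r_w)$ if $k$ is a CDS of weight $c$ in reference to $w$. For a bank $v$, $l_v(r)$ is the sum of the liabilities of the contracts with debtor $v$; $l_v^{(\rho)}(r)$ is the sum of the liabilities of contracts with debtor $v$ and priority $\rho$; and $l_v^{(\le\rho)}(r)=\sum_{i=1}^{\rho}l_v^{(i)}(r)$ (with $l_v^{(\le 0)}=0$). The payment on a contract $k$ with debtor $v$ and priority $\rho$ is $p_k(r)=l_k(r)\cdot\min\{1,\max\{0,(r_v l_v(r)-l_v^{(\le\rho-1)}(r))/l_v^{(\rho)}(r)\}\}$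 (and $p_k(r)=0$ if $l_v^{(\rho)}(r)=0$). The assets of $v$ are $a_v(r)=e_v+\sum_k p_k(r)$, summing over contracts $k$ with creditor $v$. A vector $r\in[0,1]^V$ is a solution (clearing vector) if for every $v\in V$: $r_v=1$ when $a_v(r)\ge l_v(r)$, and $r_v=a_v(r)/l_v(r)$ when $a_v(r)<l_v(r)$. The payoff of $v$ is $q_v(r)=\max\{a_v(r)-l_v(r),0\}$. When $P=1$, payments reduce to $p_k(r)=r_v\,l_k(r)$ (principle of proportionality); this is called the base model. *)

(* Defs.v *)
From Stdlib Require Import Reals Lra List Arith.
Import ListNotations.
Open Scope R_scope.

(* Banks are the natural numbers 0, ..., nbanks-1. *)
Inductive ckind : Type :=
  | Debt : ckind
  | CDS : nat -> ckind.          (* CDS in reference to the given bank *)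

Record contract : Type := mkContract {
  debtor : nat;
  creditor : nat;
  kind : ckind;
  weight : R;
  prio : nat }.

Record system : Type := mkSystem {
  nbanks : nat;
  ext : nat -> R;
  nprio : nat;
  contracts : list contract }.

Definition sumR (l : list R) : R := fold_right Rplus 0 l.

Definition wf_system (S : system) : Prop :=
  (1 <= nprio S)%nat /\
  (forall v, (v < nbanks S)%nat -> 0 <= ext S v) /\
  (forall k, In k (contracts S) ->
     (debtor k < nbanks S)%nat /\ (creditor k < nbanks S)%nat /\
     debtor k <> creditor k /\ 0 < weight k /\
     (1 <= prio k <= nprio S)%nat /\
     (forall w, kind k = CDS w ->
        (w < nbanks S)%nat /\ w <> debtor k /\ w <> creditor k /\
        exists k', In k' (contracts S) /\ debtor k' = w /\
                   kind k' = Debt /\ 0 < weight k')).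

Definition base_model (S : system) : Prop := nprio S = 1%nat.

Section Clearing.
Variable S : system.
Variable r : nat -> R.

Definition liab (k : contract) : R :=
  match kind k with
  | Debt => weight k
  | CDS w => weight k * (1 - r w)
  end.

Definition liab_bank (v : nat) : R :=
  sumR (map liab (filter (fun k => Nat.eqb (debtor k) v) (contracts S))).

Definition liab_prio (v rho : nat) : R :=
  sumR (map liab (filter (fun k => andb (Nat.eqb (debtor k) v) (Nat.eqb (prio k) rho))
                         (contracts S))).

Definition liab_le (v rho : nat) : R :=
  sumR (map (liab_prio v) (seq 1 rho)).

Definition payment (k : contract) : R :=
  let v := debtor k in
  let rho := prio k in
  if Req_EM_T (liab_prio v rho) 0 then 0
  else liab k * Rmin 1 (Rmax 0 ((r v * liab_bank v - liab_le v (rho - 1))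
                                 / liab_prio v rho)).

Definition assets (v : nat) : R :=
  ext S v + sumR (map payment (filter (fun k => Nat.eqb (creditor k) v)
                                      (contracts S))).

Definition payoff (v : nat) : R := Rmax (assets v - liab_bank v) 0.

End Clearing.

Definition is_solution (S : system) (r : nat -> R) : Prop :=
  forall v, (v < nbanks S)%nat ->
    0 <= r v <= 1 /\
    (assets S r v >= liab_bank S r v -> r v = 1) /\
    (assets S r v < liab_bank S r v -> r v = assets S r v / liab_bank S r v).

Definition unique_solution (S : system) (r : nat -> R) : Prop :=
  is_solution S r /\
  forall r', is_solution S r' -> forall v, (v < nbanks S)%nat -> r' v = r v.

(* Main.v *)
Require Import Defs.
From Stdlib Require Import Reals List Lra Lia.
Import ListNotations.
Open Scope R_scope.

Definition e0 (i : nat) : R := match i with 0%nat => 1 | 1%nat => 1 | _ => 0 end.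
Definition cw := mkContract 0 2 Debt 1 1.
Definition cc := mkContract 1 2 (CDS 0) 2 1.
Definition S1 := mkSystem 3 e0 1 ([] ++ mkContract 0 1 Debt 1 1 :: [cw; cc]).
Definition S2 := mkSystem 3 e0 1 ([] ++ [cw; cc]).

Ltac unf :=
  unfold payoff, assets, liab_bank, payment, liab_prio, liab_le, liab, S1, S2, cw, cc, e0 in *;
  simpl in *;
  unfold payoff, assets, liab_bank, payment, liab_prio, liab_le, liab in *; simpl in *.
Ltac fin :=
  repeat (destruct Req_EM_T; try lra);
  unfold Rmin, Rmax in *;
  repeat (destruct Rle_dec; try lra);
  try (repeat split; intros; try lra; field).
Ltac crunch := unf; fin.

Lemma sol1 : is_solution S1 (fun i => if Nat.eqb i 0 then 1/2 else 1).
Proof.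
  intros v Hv.
  destruct v as [|[|[|v]]]; try lia; crunch.
Qed.

Lemma sol2 : is_solution S2 (fun _ => 1).
Proof.
  intros v Hv.
  destruct v as [|[|[|v]]]; try lia; crunch.
Qed.

Lemma uniq1 : forall r', is_solution S1 r' -> forall v, (v < nbanks S1)%nat ->
  r' v = (fun i => if Nat.eqb i 0 then 1/2 else 1) v.
Proof.
  intros r' H.
  pose proof (H 0%nat ltac:(simpl; lia)) as H0.
  pose proof (H 1%nat ltac:(simpl; lia)) as H1.
  pose proof (H 2%nat ltac:(simpl; lia)) as H2.
  assert (E0 : r' 0%nat = 1/2).
  { destruct H0 as [B [A C]]. crunch. }
  assert (E1 : r' 1%nat = 1).
  { destruct H1 as [B [A C]]. rewrite E0 in *. crunch. }
  assert (E2 : r' 2%nat = 1).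
  { clear H H0 H1. destruct H2 as [B [A C]]. unf. rewrite E0, E1 in *.
    replace (2 * (1 - 1 / 2) + 0) with 1 in * by field.
    replace (1 + (1 + 0)) with 2 in * by field. fin. }
  intros v Hv. simpl in Hv.
  destruct v as [|[|[|v]]]; try lia; simpl; assumption.
Qed.

Lemma uniq2 : forall r', is_solution S2 r' -> forall v, (v < nbanks S2)%nat ->
  r' v = 1.
Proof.
  intros r' H.
  pose proof (H 0%nat ltac:(simpl; lia)) as H0.
  pose proof (H 1%nat ltac:(simpl; lia)) as H1.
  pose proof (H 2%nat ltac:(simpl; lia)) as H2.
  assert (E0 : r' 0%nat = 1).
  { clear H H1 H2. destruct H0 as [B [A C]]. crunch. }
  assert (E1 : r' 1%nat = 1).
  { clear H H0 H2. destruct H1 as [B [A C]]. unf. rewrite E0 in *.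
    replace (2 * (1 - 1) + 0) with 0 in * by field. fin. }
  assert (E2 : r' 2%nat = 1).
  { clear H H0 H1. destruct H2 as [B [A C]]. unf. rewrite E0, E1 in *.
    replace (2 * (1 - 1) + 0) with 0 in * by field.
    replace (1 + 0) with 1 in * by field. fin. }
  intros v Hv. simpl in Hv.
  destruct v as [|[|[|v]]]; try lia; simpl; assumption.
Qed.

Theorem mainTheorem2 :
  exists (n : nat) (e : nat -> R) (l1 l2 : list contract)
         (u v : nat) (c : R) (rho : nat),
    let S := mkSystem n e 1 (l1 ++ mkContract u v Debt c rho :: l2) in
    let S' := mkSystem n e 1 (l1 ++ l2) in
    wf_system S /\ base_model S /\ wf_system S' /\
    u <> v /\ 0 < c /\
    exists r r',
      unique_solution S r /\ unique_solution S' r' /\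
      payoff S' r' v > payoff S r v.
Proof.
  exists 3%nat, e0, [], [cw; cc], 0%nat, 1%nat, 1, 1%nat.
  cbv zeta.
  split; [|split; [reflexivity|split; [|split; [lia|split; [lra|]]]]].
  - unfold wf_system; simpl. split; [lia|]. split.
    + intros v Hv; destruct v as [|[|[|v]]]; simpl; lra.
    + intros k Hk. destruct Hk as [<-|[<-|[<-|[]]]]; simpl;
        repeat split; try lia; try lra;
        try (match goal with H : _ = CDS _ |- _ => try discriminate H; injection H as <- end);
        try lia; exists cw; unfold cw; simpl; repeat split; auto 10; lra.
  - unfold wf_system; simpl. split; [lia|]. split.
    + intros v Hv; destruct v as [|[|[|v]]]; simpl; lra.
    + intros k Hk. destruct Hk as [<-|[<-|[]]]; simpl;
        repeat split; try lia; try lra;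
        try (match goal with H : _ = CDS _ |- _ => try discriminate H; injection H as <- end);
        try lia; exists cw; unfold cw; simpl; repeat split; auto 10; lra.
  - exists (fun i => if Nat.eqb i 0 then 1/2 else 1), (fun _ => 1).
    split; [split; [exact sol1|exact uniq1]|].
    split; [split; [exact sol2|]|].
    + intros r' Hr' v Hv. exact (uniq2 r' Hr' v Hv).
    + crunch.
Qed.
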